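(* Suppose $F_i$ satisfies the Production Function Assumption with condition (b), and $W_i$ satisfies the Labor Cost Assumption and the Growth Assumption. Then for every $\mathbf P\in\mathbb R^N_{>0}$ and $P_E>0$, $$\overline\Pi_i(\mathbf P,P_E)=W_i^*\big(\widetilde\Pi_i(\mathbf P,P_E)\big),$$ where $$\widetilde\Pi_i(\mathbf P,P_E)=\max_{\tilde{\mathbf q}_i\in\mathbb R^N_{\ge0},\,\tilde E_i\ge0}\Big\{P_iF_i(\tilde{\mathbf q}_i,\tilde E_i,1)-\sum_{j=1}^NP_j\tilde q_{ij}-P_E\tilde E_i\Big\}.$$ Moreover, if $W_i$ is strictly convex and differentiable, an optimal input vector $(\mathbf q_i^*,E_i^*,L_i^* )$ for $\overline\Pi_i(\mathbf P,P_E)$ is given by $$L_i^*=(W_i')^{-1}\big(\widetilde\Pi_i(\mathbf P,P_E)\big),\quad q^*_{ij}=\tilde q^*_{ij}L_i^*\ (j=1,\dots,N),\quad E_i^*=\tilde E_i^*L_i^*,$$ where $(\tilde{\mathbf q}_i^*,\tilde E_i^* )$ is a maximiser of the problem defining $\widetilde\Pi_i(\mathbf P,P_E)$.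
   Context: Inputs $(\mathbf q_i,E_i,L_i)\in\mathbb R^{N+2}_{\ge0}$ with $\mathbf q_i=(q_{ij})_{j=1}^N$; production function $F_i:\mathbb R^{N+2}_{\ge0}\to\mathbb R_{\ge0}$; labor cost $W_i:\mathbb R_{\ge0}\to\mathbb R_{>0}$. Profit $\Pi_i(\mathbf P,P_E,\mathbf q_i,E_i,L_i)=P_iF_i(\mathbf q_i,E_i,L_i)-\sum_jP_jq_{ij}-P_EE_i-W_i(L_i)$, and $\overline\Pi_i(\mathbf P,P_E)=\max_{(\mathbf q_i,E_i,L_i)\in\mathbb R^{N+2}_{\ge0}}\Pi_i$. The convex conjugate is $W_i^*(y)=\max_{L\ge0}\{Ly-W_i(L)\}$, $y\in\mathbb R$. Production Function Assumption (b): $F_i$ increasing in each argument, upper semi-continuous, concave, homogeneous of degree one ($F_i(\lambda\mathbf x)=\lambda F_i(\mathbf x)$ for $\lambda>0$), and $F_i(\mathbf q,E,L)\le c_iL$ for some $c_i<\infty$. Labor Cost Assumption: $W_i$ strictly increasing, lower semi-continuous, convex. Growth Assumption: $\lim_{L\to\infty}W_i(L)/L=+\infty$. *)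

(* Defs.v *)
From HB Require Import structures.
From mathcomp Require Import all_boot all_order all_algebra.
From mathcomp Require Import boolp classical_sets reals.
Set Implicit Arguments. Unset Strict Implicit. Unset Printing Implicit Defensive.
Import Order.TTheory GRing.Theory Num.Theory.
Local Open Scope ring_scope.
Local Open Scope classical_set_scope.

Section Defs.
Variables (R : realType) (N : nat).

Definition vec := 'I_N -> R.

Definition nonneg_vec (q : vec) : Prop := forall j, 0 <= q j.
Definition pos_vec (q : vec) : Prop := forall j, 0 < q j.

Definition feasible (q : vec) (E L : R) : Prop := nonneg_vec q /\ 0 <= E /\ 0 <= L.

(* Production functions F_i : R^{N+2}_{>=0} -> R_{>=0}, represented on all of R^{N+2};
   only the values on the nonnegative orthant matter. *)
Definition prodfun := vec -> R -> R -> R.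

Definition scale_vec (a : R) (q : vec) : vec := fun j => a * q j.
Definition comb_vec (t : R) (q q' : vec) : vec := fun j => t * q j + (1 - t) * q' j.

Definition prod_nonneg (F : prodfun) : Prop :=
  forall q E L, feasible q E L -> 0 <= F q E L.

Definition prod_increasing (F : prodfun) : Prop :=
  forall q E L q' E' L', feasible q E L -> feasible q' E' L' ->
    (forall j, q j <= q' j) -> E <= E' -> L <= L' -> F q E L <= F q' E' L'.

Definition prod_usc (F : prodfun) : Prop :=
  forall q E L, feasible q E L -> forall eps : R, 0 < eps ->
    exists2 delta : R, 0 < delta &
      forall q' E' L', feasible q' E' L' ->
        (forall j, `|q' j - q j| < delta) -> `|E' - E| < delta -> `|L' - L| < delta ->
        F q' E' L' < F q E L + eps.

Definition prod_concave (F : prodfun) : Prop :=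
  forall q E L q' E' L' (t : R), feasible q E L -> feasible q' E' L' ->
    0 <= t <= 1 ->
    t * F q E L + (1 - t) * F q' E' L'
      <= F (comb_vec t q q') (t * E + (1 - t) * E') (t * L + (1 - t) * L').

Definition prod_hom1 (F : prodfun) : Prop :=
  forall q E L (lam : R), feasible q E L -> 0 < lam ->
    F (scale_vec lam q) (lam * E) (lam * L) = lam * F q E L.

Definition prod_labor_bound (F : prodfun) : Prop :=
  exists c : R, forall q E L, feasible q E L -> F q E L <= c * L.

Definition ProdAssumption_b (F : prodfun) : Prop :=
  prod_nonneg F /\ prod_increasing F /\ prod_usc F /\ prod_concave F /\
  prod_hom1 F /\ prod_labor_bound F.

(* Labor cost W_i : R_{>=0} -> R_{>0}, represented on R; only values on [0,oo) matter. *)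
Definition LaborCostAssumption (W : R -> R) : Prop :=
  [/\ (forall L, 0 <= L -> 0 < W L),
      (forall L L', 0 <= L -> L < L' -> W L < W L'),
      (forall L, 0 <= L -> forall eps : R, 0 < eps ->
         exists2 delta : R, 0 < delta &
           forall L', 0 <= L' -> `|L' - L| < delta -> W L - eps < W L')
    &
      (forall L L' (t : R), 0 <= L -> 0 <= L' -> 0 <= t <= 1 ->
         W (t * L + (1 - t) * L') <= t * W L + (1 - t) * W L')].

Definition GrowthAssumption (W : R -> R) : Prop :=
  forall M : R, exists L0 : R, forall L, L0 <= L -> 0 < L -> M <= W L / L.

Definition strictly_convex_nonneg (W : R -> R) : Prop :=
  forall L L' (t : R), 0 <= L -> 0 <= L' -> L != L' -> 0 < t < 1 ->
    W (t * L + (1 - t) * L') < t * W L + (1 - t) * W L'.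

Definition has_deriv_nonneg (W : R -> R) (x d : R) : Prop :=
  forall eps : R, 0 < eps -> exists2 delta : R, 0 < delta &
    forall h : R, h != 0 -> `|h| < delta -> 0 <= x + h ->
      `|(W (x + h) - W x) / h - d| < eps.

Definition differentiable_nonneg (W : R -> R) : Prop :=
  forall x, 0 <= x -> exists d, has_deriv_nonneg W x d.

Definition profit (F : prodfun) (W : R -> R) (i : 'I_N) (P : vec) (PE : R)
    (q : vec) (E L : R) : R :=
  P i * F q E L - \sum_(j < N) P j * q j - PE * E - W L.

Definition Pibar (F : prodfun) (W : R -> R) (i : 'I_N) (P : vec) (PE : R) : R :=
  sup [set r | exists q E L, feasible q E L /\ r = profit F W i P PE q E L].

Definition unit_profit (F : prodfun) (i : 'I_N) (P : vec) (PE : R)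
    (qt : vec) (Et : R) : R :=
  P i * F qt Et 1 - \sum_(j < N) P j * qt j - PE * Et.

Definition Pitilde (F : prodfun) (i : 'I_N) (P : vec) (PE : R) : R :=
  sup [set r | exists qt Et, nonneg_vec qt /\ 0 <= Et /\ r = unit_profit F i P PE qt Et].

Definition Wstar (W : R -> R) (y : R) : R :=
  sup [set r | exists L, 0 <= L /\ r = L * y - W L].

End Defs.

(* Main.v *)
Require Import Defs.
From HB Require Import structures.
From mathcomp Require Import all_boot all_order all_algebra.
From mathcomp Require Import boolp classical_sets reals.
From mathcomp Require Import ring lra.
Import Order.TTheory GRing.Theory Num.Theory.
Local Open Scope ring_scope.

Lemma conv_deriv (R : realType) (W : R -> R) (x d L : R) :
  (forall L L' (t : R), 0 <= L -> 0 <= L' -> 0 <= t <= 1 ->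
         W (t * L + (1 - t) * L') <= t * W L + (1 - t) * W L') ->
  0 <= x -> 0 <= L -> has_deriv_nonneg W x d -> W x + d * (L - x) <= W L.
Proof.
move=> Hc Hx HL Hd.
have [->|HLx] := eqVneq L x; first by rewrite subrr mulr0 addr0.
rewrite leNgt; apply/negP => Hlt.
set D := L - x.
have HD : D != 0 by rewrite subr_eq0.
have HaD : 0 < `|D| by rewrite normr_gt0.
set gap := W x + d * D - W L.
have Hgap : 0 < gap by rewrite subr_gt0.
have Heps : 0 < gap / `|D| by rewrite divr_gt0.
have [del Hdel Hh] := Hd _ Heps.
set t := del / (del + `|D|).
have Ht0 : 0 < t by rewrite divr_gt0 // addr_gt0.
have Ht1 : t < 1 by rewrite ltr_pdivrMr ?addr_gt0 // mul1r ltrDl.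
have HtD : t * `|D| < del.
  rewrite /t mulrAC ltr_pdivrMr ?addr_gt0 // mulrDr ltrDr.
  by rewrite mulr_gt0.
set h := t * D.
have Hh0 : h != 0 by rewrite mulf_neq0 // gt_eqF.
have Hnh : `|h| = t * `|D| by rewrite normrM gtr0_norm.
have Hxh : x + h = t * L + (1 - t) * x by rewrite /h /D; ring.
have Hpos : 0 <= x + h.
  rewrite Hxh addr_ge0 // mulr_ge0 //; first exact: ltW.
  by rewrite subr_ge0 ltW.
have Hhd : `|h| < del by rewrite Hnh.
have := Hh h Hh0 Hhd Hpos.
set A := W (x + h) - W x - d * h.
have -> : (W (x + h) - W x) / h - d = A / h by rewrite /A; field.
have HA : A <= - (t * gap).
  have Ht01 : 0 <= t <= 1 by rewrite (ltW Ht0) (ltW Ht1).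
  have := Hc L x t HL Hx Ht01.
  rewrite -Hxh /A /gap /h => Hc'.
  lra.
have HnA : t * gap <= `|A| by rewrite -normrN ler_normr; apply/orP; left; lra.
move=> Hlt2.
have : `|A| < gap / `|D| * `|h|.
  rewrite -ltr_pdivrMr ?normr_gt0 //.
  by rewrite -normfV -normrM.
rewrite Hnh.
have -> : gap / `|D| * (t * `|D|) = t * gap by field; rewrite gt_eqF.
by rewrite ltNge HnA.
Qed.

Lemma profit_scale (R : realType) (N : nat) (i : 'I_N) (F : prodfun R N) (W : R -> R)
  (P : vec R N) (PE : R) (qt : vec R N) (Et L : R) :
  prod_hom1 F -> nonneg_vec qt -> 0 <= Et -> 0 < L ->
  profit F W i P PE (scale_vec L qt) (L * Et) L = L * unit_profit F i P PE qt Et - W L.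
Proof.
move=> Hh Hq HE HL.
rewrite /profit /unit_profit.
have -> : F (scale_vec L qt) (L * Et) L = L * F qt Et 1.
  by rewrite -{3}(mulr1 L) Hh //; split => //; split.
have -> : \sum_(j < N) P j * scale_vec L qt j = L * \sum_(j < N) P j * qt j.
  rewrite big_distrr; apply: eq_bigr => j _ /=; rewrite /scale_vec; ring.
ring.
Qed.

Lemma F_L0 (R : realType) (N : nat) (F : prodfun R N) q E :
  prod_nonneg F -> prod_labor_bound F -> nonneg_vec q -> 0 <= E -> F q E 0 = 0.
Proof.
move=> Hn [c Hc] Hq HE.
have Hf : feasible q E 0 by split => //; split.
apply/eqP; rewrite eq_le Hn // andbT.
by have := Hc _ _ _ Hf; rewrite mulr0.
Qed.

Lemma unit_bound (R : realType) (N : nat) (i : 'I_N) (F : prodfun R N) (P : vec R N) (PE : R) :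
  prod_labor_bound F -> pos_vec P -> 0 < PE ->
  has_sup [set r | exists qt Et, nonneg_vec qt /\ 0 <= Et /\ r = unit_profit F i P PE qt Et].
Proof.
move=> [c Hc] HP HPE; split.
  exists (unit_profit F i P PE (fun _ => 0) 0), (fun _ => 0), 0; split => //; split => //.
exists (P i * c) => r [qt [Et [Hq [HE ->]]]].
rewrite /unit_profit.
have Hf : feasible qt Et 1 by split => //; split.
have := Hc _ _ _ Hf; rewrite mulr1 => H1.
have H2 : 0 <= \sum_(j < N) P j * qt j.
  by apply: sumr_ge0 => j _; rewrite mulr_ge0 // ltW.
have H3 : 0 <= PE * Et by rewrite mulr_ge0 // ltW.
have H4 : P i * F qt Et 1 <= P i * c by rewrite ler_wpM2l // ltW.
lra.
Qed.

Lemma Wstar_bound (R : realType) (W : R -> R) (y : R) :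
  (forall L, 0 <= L -> 0 < W L) -> GrowthAssumption W ->
  has_sup [set r | exists L, 0 <= L /\ r = L * y - W L].
Proof.
move=> HWp HG; split.
  by exists (0 * y - W 0), 0.
have [L0 HL0] := HG `|y|.
exists (`|y| * `|L0|) => r [L [HL ->]].
have Hy : L * y <= L * `|y| by rewrite ler_wpM2l // ler_norm.
have HW := HWp L HL.
have [HLL0|HLL0] := leP L0 L.
  have [HL0'|HL0'] := eqVneq L 0.
    subst L; rewrite mul0r; have := normr_ge0 y; have := normr_ge0 L0; nra.
  have HLp : 0 < L by rewrite lt_def HL0' HL.
  have := HL0 L HLL0 HLp; rewrite ler_pdivlMr // => H.
  have := normr_ge0 y; have := normr_ge0 L0; nra.
have : L <= `|L0| by apply: (le_trans (ltW HLL0)); exact: ler_norm.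
have := normr_ge0 y; nra.
Qed.

Lemma profit_le (R : realType) (N : nat) (i : 'I_N) (F : prodfun R N) (W : R -> R)
  (P : vec R N) (PE : R) q E L :
  ProdAssumption_b F -> pos_vec P -> 0 < PE -> feasible q E L ->
  profit F W i P PE q E L <= L * Pitilde F i P PE - W L.
Proof.
move=> [Hn [_ [_ [_ [Hh Hb]]]]] HP HPE [Hq [HE HL]].
have Hs := @unit_bound _ _ i F P PE Hb HP HPE.
have [HL0|HL0] := eqVneq L 0.
  subst L; rewrite /profit F_L0 // mul0r mulr0.
  have H2 : 0 <= \sum_(j < N) P j * q j.
    by apply: sumr_ge0 => j _; rewrite mulr_ge0 // ltW.
  have H3 : 0 <= PE * E by rewrite mulr_ge0 // ltW.
  lra.
have HLp : 0 < L by rewrite lt_def HL0 HL.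
set qt := scale_vec L^-1 q.
have Hq' : nonneg_vec qt by move=> j; rewrite /qt /scale_vec mulr_ge0 // invr_ge0.
have HE' : 0 <= L^-1 * E by rewrite mulr_ge0 // invr_ge0.
have Hsc : scale_vec L qt = q.
  by apply/funext => j; rewrite /qt /scale_vec mulrA mulfV ?mul1r // gt_eqF.
have HLE : L * (L^-1 * E) = E by rewrite mulrA mulfV ?mul1r // gt_eqF.
have := @profit_scale _ _ i F W P PE _ _ _ Hh Hq' HE' HLp; rewrite Hsc HLE => ->.
rewrite lerD2r; apply: ler_wpM2l; first exact: ltW.
apply: sup_upper_bound => //.
by exists qt, (L^-1 * E).
Qed.

Theorem proposition2p2 (R : realType) (N : nat) (i : 'I_N)
    (F : prodfun R N) (W : R -> R)
    (HF : ProdAssumption_b F) (HW : LaborCostAssumption W) (HG : GrowthAssumption W) :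
  forall (P : vec R N) (PE : R), pos_vec P -> 0 < PE ->
    Pibar F W i P PE = Wstar W (Pitilde F i P PE) /\
    (strictly_convex_nonneg W -> differentiable_nonneg W ->
     forall (Lstar : R), 0 <= Lstar ->
       has_deriv_nonneg W Lstar (Pitilde F i P PE) ->
     forall (qt : vec R N) (Et : R), nonneg_vec qt -> 0 <= Et ->
       (forall qt' Et', nonneg_vec qt' -> 0 <= Et' ->
          unit_profit F i P PE qt' Et' <= unit_profit F i P PE qt Et) ->
     feasible (scale_vec Lstar qt) (Et * Lstar) Lstar /\
     forall q E L, feasible q E L ->
       profit F W i P PE q E L
         <= profit F W i P PE (scale_vec Lstar qt) (Et * Lstar) Lstar).
Proof.
move=> P PE HP HPE.
have HF' := HF; move: HF' => [Hn [_ [_ [_ [Hh Hb]]]]].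
case: HW => HWp _ _ Hcv.
set Pt := Pitilde F i P PE.
have Hs := @unit_bound _ _ i F P PE Hb HP HPE.
have HWs := @Wstar_bound _ W Pt HWp HG.
have Hprof0 : profit F W i P PE (fun _ => 0) 0 0 = 0 * Pt - W 0.
  have Hz : nonneg_vec (fun _ : 'I_N => (0:R)) by move=> j.
  rewrite /profit F_L0 //.
  rewrite big1; last by move=> j _; rewrite mulr0.
  rewrite !mulr0 mul0r; lra.
have Hpb : has_sup [set r | exists q E L, feasible q E L /\ r = profit F W i P PE q E L].
  split.
    exists (profit F W i P PE (fun _ => 0) 0 0), (fun _ => 0), 0, 0.
    by split => //; split => //; split.
  exists (Wstar W Pt) => r [q [E [L [Hf ->]]]].
  apply: le_trans (@profit_le _ _ i F W P PE _ _ _ HF HP HPE Hf) _.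
  apply: sup_upper_bound => //; exists L; split => //; by case: Hf => _ [].
split.
  apply/eqP; rewrite eq_le; apply/andP; split.
    apply: ge_sup; first by case: Hpb.
    move=> r [q [E [L [Hf ->]]]].
    apply: le_trans (@profit_le _ _ i F W P PE _ _ _ HF HP HPE Hf) _.
    apply: sup_upper_bound => //; exists L; split => //; by case: Hf => _ [].
  apply: ge_sup; first by case: HWs.
  move=> r [L [HL ->]].
  have [HL0|HL0] := eqVneq L 0.
    subst L; rewrite -Hprof0; apply: sup_upper_bound => //.
    by exists (fun _ => 0), 0, 0; split => //; split => //; split.
  have HLp : 0 < L by rewrite lt_def HL0 HL.
  apply/ler_addgt0Pr => e He.
  have He' : 0 < e / L by rewrite divr_gt0.
  have [u [qt [Et [Hq [HE ->]]]] Hu] := sup_adherent He' Hs.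
  have Hin : profit F W i P PE (scale_vec L qt) (L * Et) L <= Pibar F W i P PE.
    apply: sup_upper_bound => //; exists (scale_vec L qt), (L * Et), L; split => //.
    split; first by move=> j; rewrite /scale_vec mulr_ge0 // ltW.
    by split => //; rewrite mulr_ge0 // ltW.
  rewrite profit_scale // in Hin.
  have : L * (Pt - e / L) < L * unit_profit F i P PE qt Et by rewrite ltr_pM2l.
  rewrite mulrBr mulrCA mulfV ?gt_eqF // mulr1.
  fold Pt in Hin. lra.
move=> _ _ Ls HLs Hd qt Et Hq HE Hmax.
have Hu : unit_profit F i P PE qt Et = Pt.
  apply/eqP; rewrite eq_le; apply/andP; split.
    by apply: sup_upper_bound => //; exists qt, Et.
  apply: ge_sup; first by case: Hs.
  by move=> r [qt' [Et' [Hq' [HE' ->]]]]; apply: Hmax.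
have Hfe : feasible (scale_vec Ls qt) (Et * Ls) Ls.
  split; first by move=> j; rewrite /scale_vec mulr_ge0.
  by split => //; rewrite mulr_ge0.
split => // q E L Hf.
have Hrhs : profit F W i P PE (scale_vec Ls qt) (Et * Ls) Ls = Ls * Pt - W Ls.
  have [HL0|HL0] := eqVneq Ls 0.
    subst Ls; have Hz : nonneg_vec (scale_vec 0 qt) by case: Hfe.
    have Hz2 : 0 <= Et * 0 by rewrite mulr0.
    rewrite /profit F_L0 //.
    rewrite big1; last by move=> j _; rewrite /scale_vec mul0r mulr0.
    rewrite !mulr0 mul0r; lra.
  have HLp : 0 < Ls by rewrite lt_def HL0 HLs.
  by rewrite mulrC profit_scale // Hu.
rewrite Hrhs; apply: le_trans (@profit_le _ _ i F W P PE _ _ _ HF HP HPE Hf) _.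
have HL : 0 <= L by case: Hf => _ [].
have := @conv_deriv _ W _ _ _ Hcv HLs HL Hd.
fold Pt; lra.
Qed.
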